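(* Let $H:\mathbb{R}\to\mathbb{R}$ be a smooth, bounded function with $H(-s)=H(s)\ge 0$ for all $s$, $\int_0^{+\infty} sH(s)\,ds=1$, and such that $H$ either has compact support or $H$ and all its derivatives decay sufficiently fast as $|s|\to\infty$. Let $\zeta:\mathbb{R}\to\mathbb{R}$ be continuous and bounded with $\min_{x\in\mathbb{R}}\zeta(x)=\delta_m>0$, and define $\gamma(s,x)=\zeta(x)^{-2}H(s/\zeta(x))$. Let $\psi_0$ be piecewise continuous and uniformly bounded on $\mathbb{R}$ with a finite number of discontinuities, and let $u=u(x,t)$ be the solution of $$u_t(x,t)+\int_0^{+\infty}\big[u(x,t)-u(x-s,t)\big]\gamma(s,x)\,ds=0,\quad x\in\mathbb{R},\ t>0,\qquad u(x,0)=\psi_0(x).$$ Then for all $t>0$ the function $u(\cdot,t)$ remains piecewise continuous, and its only points of discontinuity are (among) the points of discontinuity of the initial data $\psi_0$.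
   Context: This is a nonlocal analogue of the linear convection equation $u_t+u_x=0$; the integral term is an upwind nonlocal derivative with kernel $\gamma$ and spatially varying horizon parameter $\zeta(x)$, which measures the range of nonlocal interactions. Throughout, the horizon is assumed strictly positive everywhere (fully nonlocal regime). *)

(* Defs.v *)
From Stdlib Require Import Reals List.
From Coquelicot Require Import Coquelicot.
Open Scope R_scope.

Definition smooth (f : R -> R) : Prop :=
  forall (n : nat) (x : R), ex_derive_n f n x.

Definition bounded_fun (f : R -> R) : Prop :=
  exists M : R, forall x, Rabs (f x) <= M.

Definition compact_support (f : R -> R) : Prop :=
  exists A : R, forall s, A < Rabs s -> f s = 0.

(* "H and all its derivatives decay sufficiently fast": read as rapid
   (Schwartz-type) decay: |s|^k |H^(n)(s)| is bounded for all n, k. *)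
Definition rapid_decay (f : R -> R) : Prop :=
  forall (n k : nat), exists M : R,
    forall s, Rabs s ^ k * Rabs (Derive_n f n s) <= M.

Definition piecewise_continuous (f : R -> R) : Prop :=
  exists D : list R,
    (forall x, ~ In x D -> continuous f x) /\
    (forall x, In x D ->
       (exists l, filterlim f (at_left x) (locally l)) /\
       (exists l, filterlim f (at_right x) (locally l))).

Definition gamma (H zeta : R -> R) (s x : R) : R :=
  / (zeta x ^ 2) * H (s / zeta x).

Definition is_solution (H zeta psi0 : R -> R) (u : R -> R -> R) : Prop :=
  (forall x, u x 0 = psi0 x) /\
  (forall x, filterlim (fun t => u x t) (at_right 0) (locally (psi0 x))) /\
  (forall T, exists M, forall x t, 0 <= t <= T -> Rabs (u x t) <= M) /\
  (forall x t, 0 < t ->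
     exists I : R,
       is_RInt_gen (fun s => (u x t - u (x - s) t) * gamma H zeta s x)
                   (at_point 0) (Rbar_locally p_infty) I /\
       is_derive (fun tau => u x tau) t (- I)).

(* Main.v *)
Require Import Defs.
From Stdlib Require Import Reals Lra Psatz List.
From Coquelicot Require Import Coquelicot.
Open Scope R_scope.

Lemma ballR (x e y : R) : ball x e y <-> Rabs (y - x) < e.
Proof. split; intro h; exact h. Qed.

Lemma cont_ed (f : R -> R) x :
  continuous f x <-> forall e, 0 < e -> exists d, 0 < d /\ forall y, Rabs (y - x) < d -> Rabs (f y - f x) < e.
Proof.
  split.
  - intros h e he. destruct (proj1 (filterlim_locally f (f x)) h (mkposreal e he)) as [d hd].
    exists d. split. apply cond_pos. intros y hy. apply (hd y hy).
  - intros h. apply (proj2 (filterlim_locally f (f x))). intros e.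
    destruct (h e (cond_pos e)) as [d [hd1 hd2]]. exists (mkposreal d hd1).
    intros y hy. apply hd2. exact hy.
Qed.

Lemma right_ed (f : R -> R) x l :
  filterlim f (at_right x) (locally l) -> forall e, 0 < e -> exists d, 0 < d /\ forall y, x < y -> y - x < d -> Rabs (f y - l) < e.
Proof.
  intros h e he. destruct (proj1 (filterlim_locally f l) h (mkposreal e he)) as [d hd].
  exists d. split. apply cond_pos. intros y h1 h2. apply (hd y). apply ballR.
  rewrite Rabs_right; lra. exact h1.
Qed.

Lemma left_ed (f : R -> R) x l :
  filterlim f (at_left x) (locally l) -> forall e, 0 < e -> exists d, 0 < d /\ forall y, y < x -> x - y < d -> Rabs (f y - l) < e.
Proof.
  intros h e he. destruct (proj1 (filterlim_locally f l) h (mkposreal e he)) as [d hd].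
  exists d. split. apply cond_pos. intros y h1 h2. apply (hd y). apply ballR.
  rewrite Rabs_left; lra. exact h1.
Qed.

Lemma cauchy_side (f : R -> R) (F : (R -> Prop) -> Prop) : ProperFilter F ->
  (forall e, 0 < e -> exists c, F (fun y => Rabs (f y - c) < e)) ->
  exists l, filterlim f F (locally l).
Proof.
  intros PF h.
  assert (PF' : ProperFilter (filtermap f F)) by (apply filtermap_proper_filter; exact PF).
  assert (hc : cauchy (filtermap f F)).
  { intros e. destruct (h e (cond_pos e)) as [c hc]. exists c. exact hc. }
  exists (lim (filtermap f F)). apply (proj2 (filterlim_locally f _)).
  intros e. exact (complete_cauchy (filtermap f F) PF' hc e).
Qed.

Lemma exp_m1 h : Rabs (exp h - 1) <= Rabs h * exp (Rabs h).
Proof.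
  pose proof (exp_ineq1_le h). pose proof (exp_ineq1_le (- h)).
  assert (e1 : exp h * exp (- h) = 1) by (rewrite <- exp_plus; replace (h + - h) with 0 by ring; apply exp_0).
  pose proof (exp_pos h). pose proof (exp_pos (-h)).
  destruct (Rle_or_lt 0 h).
  - rewrite (Rabs_right h) by lra. rewrite Rabs_right by lra.
    nra.
  - rewrite (Rabs_left h) by lra. rewrite Rabs_left1 by (assert (exp h < exp 0) by (apply exp_increasing; lra); rewrite exp_0 in *; lra).
    assert (exp 0 < exp (-h)) by (apply exp_increasing; lra). rewrite exp_0 in *. nra.
Qed.

Lemma mvt_right (g dg : R -> R) t S : 0 < t ->
  (forall s, 0 < s -> s <= t -> is_derive g s (dg s)) ->
  (forall s, 0 < s -> s <= t -> Rabs (dg s) <= S) ->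
  (forall e, 0 < e -> exists d, 0 < d /\ forall s, 0 < s -> s < d -> Rabs (g s - g 0) < e) ->
  Rabs (g t - g 0) <= t * S.
Proof.
  intros ht hd hb hc.
  assert (S0 : 0 <= S) by (specialize (hb t ht (Rle_refl _)); pose proof (Rabs_pos (dg t)); lra).
  apply Rle_plus_epsilon. intros e he.
  destruct (hc e he) as [d [d0 hd']].
  set (s0 := Rmin (d/2) (t/2)).
  assert (s0p : 0 < s0) by (unfold s0; apply Rmin_glb_lt; lra).
  assert (s0d : s0 < d) by (unfold s0; pose proof (Rmin_l (d/2) (t/2)); lra).
  assert (s0t : s0 < t) by (unfold s0; pose proof (Rmin_r (d/2) (t/2)); lra).
  destruct (MVT_gen g s0 t dg) as [c [hc1 hc2]].
  - intros x hx. rewrite Rmin_left in hx by lra. rewrite Rmax_right in hx by lra.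
    apply hd; lra.
  - intros x hx. rewrite Rmin_left in hx by lra. rewrite Rmax_right in hx by lra.
    apply continuity_pt_filterlim. apply (@ex_derive_continuous R_AbsRing R_NormedModule g x). eexists. apply hd; lra.
  - rewrite Rmin_left in hc1 by lra. rewrite Rmax_right in hc1 by lra.
    specialize (hd' s0 s0p s0d). specialize (hb c ltac:(lra) ltac:(lra)).
    replace (g t - g 0) with ((g t - g s0) + (g s0 - g 0)) by ring.
    eapply Rle_trans. apply Rabs_triang. rewrite hc2. rewrite Rabs_mult.
    rewrite (Rabs_right (t - s0)) by lra. nra.
Qed.

Lemma ex_sub (f : R -> R) a b c d : a <= c -> c <= d -> d <= b -> ex_RInt f a b -> ex_RInt f c d.
Proof.
  intros h1 h2 h3 h. apply (ex_RInt_Chasles_1 f c d b). lra.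
  apply (ex_RInt_Chasles_2 f a c b). lra. exact h.
Qed.

Lemma rint_bnd (f : R -> R) a b M : ex_RInt f a b ->
  (forall y, Rmin a b <= y <= Rmax a b -> Rabs (f y) <= M) -> Rabs (RInt f a b) <= Rabs (b - a) * M.
Proof.
  intros hf hb. destruct (Rle_or_lt a b).
  - rewrite (Rabs_right (b - a)) by lra. apply abs_RInt_le_const; auto.
    intros y hy. apply hb. rewrite Rmin_left, Rmax_right; lra.
  - rewrite <- (opp_RInt_swap f b a) by (apply ex_RInt_swap; exact hf).
    rewrite (Rabs_left (b - a)) by lra.
    assert (h : Rabs (RInt f b a) <= (a - b) * M).
    { apply abs_RInt_le_const; auto. lra. apply ex_RInt_swap; exact hf.
      intros y hy. apply hb. rewrite Rmin_right, Rmax_left; lra. }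
    remember (RInt f b a) as r.
    change (Rabs (- r) <= - (b - a) * M). rewrite Rabs_Ropp. lra.
Qed.

Lemma rint_le_fun (f g : R -> R) a b : a <= b -> ex_RInt f a b -> ex_RInt g a b ->
  (forall y, a < y < b -> Rabs (f y) <= g y) -> Rabs (RInt f a b) <= RInt g a b.
Proof.
  intros hab hf hg h.
  assert (hg' : ex_RInt (fun y => - g y) a b) by (apply (ex_RInt_opp g); exact hg).
  assert (e : RInt (fun y => - g y) a b = - (RInt g a b)) by (apply (RInt_opp g); exact hg).
  assert (hl : RInt (fun y => - g y) a b <= RInt f a b).
  { apply RInt_le; auto. 
    intros y hy. specialize (h y hy). apply Rabs_le_between in h. lra. }
  assert (hu : RInt f a b <= RInt g a b).
  { apply RInt_le; auto. intros y hy. specialize (h y hy). apply Rabs_le_between in h. lra. }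
  rewrite e in hl. apply Rabs_le. lra.
Qed.

Lemma rint_inv_sq K b b' : 0 < b -> b <= b' -> is_RInt (fun s => K / (s * s)) b b' (K / b - K / b').
Proof.
  intros hb hbb.
  replace (K / b - K / b') with (minus ((fun s => - K / s) b') ((fun s => - K / s) b)).
  2:{ unfold minus, plus, opp; simpl. field. lra. }
  apply (is_RInt_derive (V:=R_CompleteNormedModule) (fun s => - K / s)).
  - intros x hx. rewrite Rmin_left, Rmax_right in hx by lra.
    auto_derive. lra. field. lra.
  - intros x hx. rewrite Rmin_left, Rmax_right in hx by lra.
    apply (@ex_derive_continuous R_AbsRing R_NormedModule). auto_derive. nra.
Qed.

Lemma rint_inv_sq_le K b b' : 0 < b -> b <= b' -> 0 <= K -> RInt (fun s => K / (s * s)) b b' <= K / b.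
Proof.
  intros. rewrite (is_RInt_unique _ _ _ _ (rint_inv_sq K b b' H H0)).
  assert (0 <= K / b') by (apply Rdiv_le_0_compat; lra). lra.
Qed.

Lemma gen_ext (f : R -> R) I : is_RInt_gen f (at_point 0) (Rbar_locally p_infty) I ->
  forall e, 0 < e -> exists B, forall b, B < b -> ex_RInt f 0 b /\ Rabs (RInt f 0 b - I) < e.
Proof.
  intros h e he.
  assert (hl : locally I (ball I (mkposreal e he))) by (apply locally_ball).
  specialize (h _ hl). destruct h as [Q R0 hQ hR hP].
  destruct hR as [B hB]. exists B. intros b hb.
  destruct (hP 0 b hQ (hB b hb)) as [y [hy1 hy2]]. simpl in hy1.
  split. exists y. exact hy1. rewrite (is_RInt_unique _ _ _ _ hy1). exact hy2.
Qed.

Section Main.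
Variables (H zeta psi0 : R -> R) (u : R -> R -> R) (t dl Hb M2 Mu : R).
Hypothesis ht : 0 < t.
Hypothesis hdl : 0 < dl.
Hypothesis hz : forall x, dl <= zeta x.
Hypothesis hH : forall s, 0 <= H s <= Hb.
Hypothesis hM2 : forall s, s * s * H s <= M2.
Hypothesis hHc : forall s, continuity_pt H s.
Hypothesis hzc : forall x, continuity_pt zeta x.
Hypothesis hMu : forall x s, 0 <= s <= t -> Rabs (u x s) <= Mu.
Hypothesis hsol : forall x s, 0 < s -> exists I,
  is_RInt_gen (fun r => (u x s - u (x - r) s) * gamma H zeta r x) (at_point 0) (Rbar_locally p_infty) I
  /\ is_derive (fun tau => u x tau) s (- I).
Hypothesis hinit : forall x, u x 0 = psi0 x.
Hypothesis hright : forall x, filterlim (fun s => u x s) (at_right 0) (locally (psi0 x)).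

Notation g := (gamma H zeta).

Lemma zpos x : 0 < zeta x.
Proof. pose proof (hz x); lra. Qed.

Lemma M2pos : 0 <= M2.
Proof. pose proof (hM2 0). lra. Qed.

Lemma Mupos : 0 <= Mu.
Proof. pose proof (hMu 0 0 ltac:(lra)). pose proof (Rabs_pos (u 0 0)). lra. Qed.

Lemma g_bnd s x : 0 <= g s x <= Hb / (dl * dl).
Proof.
  unfold gamma. pose proof (zpos x). pose proof (hz x). destruct (hH (s / zeta x)).
  assert (0 < / (zeta x ^ 2)) by (apply Rinv_0_lt_compat; nra).
  assert (/ (zeta x ^ 2) <= / (dl * dl)) by (apply Rinv_le_contravar; nra).
  split. nra. unfold Rdiv. rewrite Rmult_comm. apply Rmult_le_compat; lra.
Qed.

Lemma g_tail s x : s <> 0 -> g s x <= M2 / (s * s).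
Proof.
  intros hs. unfold gamma. pose proof (zpos x). pose proof (hM2 (s / zeta x)).
  assert (0 < s * s) by nra.
  apply (Rmult_le_reg_r (s * s)). lra.
  replace (M2 / (s * s) * (s * s)) with M2 by (field; lra).
  replace (/ (zeta x ^ 2) * H (s / zeta x) * (s * s)) with (s / zeta x * (s / zeta x) * H (s / zeta x)).
  exact H1. field. lra.
Qed.

Lemma g_cont x s0 : continuous (fun s => g s x) s0.
Proof.
  unfold gamma. apply (continuous_mult (fun _ => / (zeta x ^ 2)) (fun s => H (s / zeta x))).
  apply continuous_const.
  apply (continuous_comp (fun s => s / zeta x) H).
  apply (continuous_mult (fun s => s) (fun _ => / zeta x)). apply continuous_id. apply continuous_const.
  apply continuity_pt_filterlim. apply hHc.
Qed.

Lemma exg x a b : ex_RInt (fun s => g s x) a b.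
Proof. apply (ex_RInt_continuous (V:=R_CompleteNormedModule)). intros; apply g_cont. Qed.


Lemma exK x s b : 0 < s -> 0 <= b -> ex_RInt (fun r => u (x - r) s * g r x) 0 b.
Proof.
  intros hs hb. destruct (hsol x s hs) as [I [hI _]].
  destruct (gen_ext _ _ hI 1 ltac:(lra)) as [B hB].
  set (b' := Rmax b B + 1).
  assert (hb1 : b <= b') by (unfold b'; pose proof (Rmax_l b B); lra).
  destruct (hB b' ltac:(unfold b'; pose proof (Rmax_r b B); lra)) as [hF _].
  apply (ex_sub _ 0 b'); try lra.
  assert (h2 : ex_RInt (fun r => u x s * g r x) 0 b').
  { apply (ex_RInt_scal (fun r => g r x)). apply exg. }
  apply (ex_RInt_ext (fun r => minus (u x s * g r x) ((u x s - u (x - r) s) * g r x))).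
  intros r _. unfold minus, plus, opp; simpl. ring.
  exact (ex_RInt_minus (V:=R_NormedModule) _ _ _ _ h2 hF).
Qed.

Definition ab (b x : R) := RInt (fun s => g s x) 0 b.
Definition Kb (b x s : R) := RInt (fun r => u (x - r) s * g r x) 0 b.
Definition Abar := Hb / (dl * dl) + M2.

Lemma exinv K b b' : 0 < b -> b <= b' -> ex_RInt (fun s => K / (s * s)) b b'.
Proof. intros. eexists. apply rint_inv_sq; assumption. Qed.

Lemma ab_bnd b x : 1 <= b -> 0 <= ab b x <= Abar.
Proof.
  intros hb. unfold ab, Abar. split.
  - apply RInt_ge_0. lra. apply exg. intros; apply g_bnd.
  - rewrite <- (RInt_Chasles (fun s => g s x) 0 1 b) by apply exg.
    assert (h1 : Rabs (RInt (fun s => g s x) 0 1) <= (1 - 0) * (Hb / (dl * dl))).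
    { apply abs_RInt_le_const. lra. apply exg. intros r hr. rewrite Rabs_right by (apply Rle_ge, g_bnd). apply g_bnd. }
    assert (h2 : RInt (fun s => g s x) 1 b <= RInt (fun s => M2 / (s * s)) 1 b).
    { apply RInt_le. lra. apply exg. apply exinv; lra. intros r hr. apply g_tail. lra. }
    pose proof (rint_inv_sq_le M2 1 b ltac:(lra) hb M2pos).
    remember (RInt (fun s => g s x) 0 1) as p. remember (RInt (fun s => g s x) 1 b) as q.
    remember (RInt (fun s => M2 / (s * s)) 1 b) as w.
    change (p + q <= Hb / (dl * dl) + M2). apply Rabs_le_between in h1. lra.
Qed.

Lemma Kb_bnd b x s : 0 < s <= t -> 0 <= b -> Rabs (Kb b x s) <= Mu * ab b x.
Proof.
  intros hs hb. unfold Kb, ab.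
  assert (e : RInt (fun r => Mu * g r x) 0 b = Mu * RInt (fun r => g r x) 0 b).
  { apply (RInt_scal (V:=R_CompleteNormedModule) (fun r => g r x)). apply exg. }
  rewrite <- e. apply rint_le_fun. lra. apply exK; lra.
  apply (ex_RInt_scal (fun r => g r x)). apply exg.
  intros r hr. rewrite Rabs_mult. rewrite (Rabs_right (g r x)) by (apply Rle_ge, g_bnd).
  apply Rmult_le_compat_r. apply g_bnd. apply hMu; lra.
Qed.

Lemma decomp x s b : 0 < s <= t -> 1 <= b ->
  Rabs (Derive (fun tau => u x tau) s + (ab b x * u x s - Kb b x s)) <= 2 * Mu * M2 / b.
Proof.
  intros hs hb. destruct (hsol x s ltac:(lra)) as [I [hI hD]].
  assert (eD : Derive (fun tau => u x tau) s = - I) by (apply is_derive_unique; exact hD).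
  rewrite eD.
  set (F := fun r => (u x s - u (x - r) s) * g r x).
  assert (eF : forall b0, 0 <= b0 -> ex_RInt F 0 b0 /\ RInt F 0 b0 = u x s * ab b0 x - Kb b0 x s).
  { intros b0 hb0.
    assert (h2 : ex_RInt (fun r => u x s * g r x) 0 b0).
    { apply (ex_RInt_scal (fun r => g r x)). apply exg. }
    assert (h3 := exK x s b0 ltac:(lra) hb0).
    assert (ee : forall r, F r = minus (u x s * g r x) (u (x - r) s * g r x)).
    { intros r. unfold F, minus, plus, opp; simpl. ring. }
    split.
    - apply (ex_RInt_ext (fun r => minus (u x s * g r x) (u (x - r) s * g r x))).
      intros; rewrite ee; reflexivity. exact (ex_RInt_minus (V:=R_NormedModule) _ _ _ _ h2 h3).
    - assert (e1 : RInt (fun r => u x s * g r x - u (x - r) s * g r x) 0 b0 =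
                   RInt (fun r => u x s * g r x) 0 b0 - RInt (fun r => u (x - r) s * g r x) 0 b0).
      { exact (RInt_minus (V:=R_CompleteNormedModule) _ _ _ _ h2 h3). }
      assert (e2 : RInt (fun r => u x s * g r x) 0 b0 = u x s * ab b0 x).
      { exact (RInt_scal (V:=R_CompleteNormedModule) (fun r => g r x) 0 b0 (u x s) (exg x 0 b0)). }
      rewrite (RInt_ext F (fun r => u x s * g r x - u (x - r) s * g r x)) by (intros r _; unfold F; apply Rmult_minus_distr_r).
      rewrite e1, e2. reflexivity. }
  assert (hmain : Rabs (I - (ab b x * u x s - Kb b x s)) <= 2 * Mu * M2 / b).
  { apply Rle_plus_epsilon. intros e he.
    destruct (gen_ext _ _ hI e he) as [B hB].
    set (b' := Rmax b B + 1).
    assert (hb1 : b <= b') by (unfold b'; pose proof (Rmax_l b B); lra).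
    destruct (hB b' ltac:(unfold b'; pose proof (Rmax_r b B); lra)) as [hF hF2].
    fold F in hF, hF2.
    destruct (eF b ltac:(lra)) as [hFb eFb].
    assert (hFbb : ex_RInt F b b') by (apply (ex_sub _ 0 b'); auto; lra).
    rewrite <- (RInt_Chasles F 0 b b') in hF2 by assumption.
    assert (ht2 : Rabs (RInt F b b') <= RInt (fun r => (2 * Mu * M2) / (r * r)) b b').
    { apply rint_le_fun; auto. apply exinv; lra.
      intros r hr. unfold F. rewrite Rabs_mult. rewrite (Rabs_right (g r x)) by (apply Rle_ge, g_bnd).
      pose proof (g_tail r x ltac:(lra)). pose proof (g_bnd r x).
      assert (Rabs (u x s - u (x - r) s) <= 2 * Mu).
      { unfold Rminus at 1. eapply Rle_trans. apply Rabs_triang. rewrite Rabs_Ropp.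
        pose proof (hMu x s ltac:(lra)). pose proof (hMu (x - r) s ltac:(lra)). lra. }
      replace (2 * Mu * M2 / (r * r)) with (2 * Mu * (M2 / (r * r))) by (field; nra).
      apply Rmult_le_compat; auto. apply Rabs_pos. apply g_bnd. }
    pose proof (rint_inv_sq_le (2 * Mu * M2) b b' ltac:(lra) hb1 ltac:(pose proof Mupos; pose proof M2pos; nra)).
    rewrite eFb in hF2.
    remember (RInt F b b') as q. remember (RInt (fun r => 2 * Mu * M2 / (r * r)) b b') as w.
    change (Rabs (u x s * ab b x - Kb b x s + q - I) < e) in hF2.
    replace (I - (ab b x * u x s - Kb b x s)) with (- (u x s * ab b x - Kb b x s + q - I) + q) by ring.
    eapply Rle_trans. apply Rabs_triang. rewrite Rabs_Ropp. lra. }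
  replace (- I + (ab b x * u x s - Kb b x s)) with (- (I - (ab b x * u x s - Kb b x s))) by ring.
  rewrite Rabs_Ropp. exact hmain.
Qed.

Lemma cpt_ed (f : R -> R) x : continuity_pt f x -> forall e, 0 < e -> exists d, 0 < d /\ forall y, Rabs (y - x) < d -> Rabs (f y - f x) < e.
Proof. intros h. apply cont_ed. apply continuity_pt_filterlim. exact h. Qed.

Lemma zinv_le x : 0 < / zeta x <= / dl.
Proof. pose proof (zpos x). split. apply Rinv_0_lt_compat; lra. apply Rinv_le_contravar; auto. Qed.

Lemma zi_cont x0 e : 0 < e -> exists d, 0 < d /\ forall x, Rabs (x - x0) < d -> Rabs (/ zeta x - / zeta x0) < e.
Proof.
  intros he. assert (hc : continuity_pt (/ zeta)%F x0).
  { apply continuity_pt_inv. apply hzc. pose proof (zpos x0). lra. }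
  exact (cpt_ed _ _ hc e he).
Qed.

Lemma g_alt s x : g s x = / zeta x * / zeta x * H (s * / zeta x).
Proof. unfold gamma, Rdiv. f_equal. pose proof (zpos x). field. lra. Qed.

Lemma GU b : 0 < b -> forall x0 e, 0 < e -> exists eta, 0 < eta /\ eta <= 1 /\
  forall x d s, Rabs (x - x0) < eta -> Rabs d < eta -> 0 <= s <= b ->
    Rabs (g (s + d) x - g s x0) <= e.
Proof.
  intros hb x0 e he.
  set (R0 := (b + 1) / dl).
  assert (huc := Heine H (fun c => - R0 <= c <= R0) (compact_P3 _ _) (fun x _ => hHc x)).
  assert (he1 : 0 < e * (dl * dl) / 2).
  { assert (0 < dl * dl) by (apply Rmult_lt_0_compat; lra). apply Rdiv_lt_0_compat; [apply Rmult_lt_0_compat|]; lra. }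
  destruct (huc (mkposreal _ he1)) as [dH hdH]. simpl in hdH.
  pose proof (cond_pos dH) as hdH0.
  assert (he2 : 0 < dH / (2 * (b + 1))) by (apply Rdiv_lt_0_compat; lra).
  destruct (zi_cont x0 _ he2) as [d1 [hd1 hz1]].
  assert (he3 : 0 < e * dl / (4 * (Hb + 1))) by (pose proof (hH 0); apply Rdiv_lt_0_compat; nra).
  destruct (zi_cont x0 _ he3) as [d2 [hd2 hz2]].
  set (eta := Rmin (Rmin d1 d2) (Rmin 1 (dH * dl / 2))).
  assert (h1 : eta <= d1) by (unfold eta; pose proof (Rmin_l (Rmin d1 d2) (Rmin 1 (dH * dl / 2))); pose proof (Rmin_l d1 d2); lra).
  assert (h2 : eta <= d2) by (unfold eta; pose proof (Rmin_l (Rmin d1 d2) (Rmin 1 (dH * dl / 2))); pose proof (Rmin_r d1 d2); lra).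
  assert (h3 : eta <= 1) by (unfold eta; pose proof (Rmin_r (Rmin d1 d2) (Rmin 1 (dH * dl / 2))); pose proof (Rmin_l 1 (dH * dl / 2)); lra).
  assert (h4 : eta <= dH * dl / 2) by (unfold eta; pose proof (Rmin_r (Rmin d1 d2) (Rmin 1 (dH * dl / 2))); pose proof (Rmin_r 1 (dH * dl / 2)); lra).
  assert (h0 : 0 < eta).
  { unfold eta. apply Rmin_glb_lt; apply Rmin_glb_lt; try lra. apply Rdiv_lt_0_compat; nra. }
  exists eta. split; [exact h0|]. split; [exact h3|].
  intros x d s hx hd hs.
  rewrite !g_alt.
  set (a := / zeta x). set (a0 := / zeta x0).
  pose proof (zinv_le x) as ha. pose proof (zinv_le x0) as ha0. fold a in ha. fold a0 in ha0.
  assert (hza := hz1 x ltac:(lra)). assert (hzb := hz2 x ltac:(lra)). fold a a0 in hza, hzb.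
  set (p := (s + d) * a). set (q := s * a0).
  assert (hdl1 : 0 < / dl) by (apply Rinv_0_lt_compat; lra).
  assert (eR0 : R0 = (b + 1) * / dl) by reflexivity.
  assert (hp : - R0 <= p <= R0).
  { unfold p. rewrite eR0. apply Rabs_lt_between in hd.
    assert (- (b + 1) <= s + d <= b + 1) by lra.
    split; nra. }
  assert (hq : - R0 <= q <= R0).
  { unfold q. rewrite eR0. split; nra. }
  assert (hpq : Rabs (p - q) < dH).
  { unfold p, q. replace ((s + d) * a - s * a0) with (d * a + s * (a - a0)) by ring.
    eapply Rle_lt_trans. apply Rabs_triang. rewrite !Rabs_mult.
    rewrite (Rabs_right a) by lra. rewrite (Rabs_right s) by lra.
    assert (Rabs d * a <= eta * / dl) by (apply Rmult_le_compat; try lra; apply Rabs_pos).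
    assert (eta * / dl <= dH / 2).
    { apply (Rmult_le_reg_r dl). lra. rewrite Rmult_assoc, Rinv_l by lra. lra. }
    assert (s * Rabs (a - a0) <= b * (dH / (2 * (b + 1)))) by (apply Rmult_le_compat; try lra; apply Rabs_pos).
    assert (b * (dH / (2 * (b + 1))) < dH / 2).
    { apply (Rmult_lt_reg_r (2 * (b + 1))). lra. field_simplify; nra. }
    lra. }
  assert (hH1 : Rabs (H p - H q) < e * (dl * dl) / 2) by (apply hdH; auto).
  replace (a * a * H p - a0 * a0 * H q) with (a * a * (H p - H q) + (a - a0) * (a + a0) * H q) by ring.
  eapply Rle_trans. apply Rabs_triang. rewrite !Rabs_mult.
  rewrite (Rabs_right a) by lra. rewrite (Rabs_right (a + a0)) by lra.
  rewrite (Rabs_right (H q)) by (apply Rle_ge, hH).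
  assert (t1 : a * a * Rabs (H p - H q) <= e / 2).
  { assert (a * a <= / dl * / dl) by (apply Rmult_le_compat; lra).
    assert (/ dl * / dl * (e * (dl * dl) / 2) = e / 2) by (field; lra).
    pose proof (Rabs_pos (H p - H q)). nra. }
  assert (t2 : Rabs (a - a0) * (a + a0) * H q <= e / 2).
  { destruct (hH q). pose proof (Rabs_pos (a - a0)).
    assert (a + a0 <= 2 * / dl) by lra.
    assert (Rabs (a - a0) * (a + a0) <= e * dl / (4 * (Hb + 1)) * (2 * / dl)) by (apply Rmult_le_compat; lra).
    assert (e * dl / (4 * (Hb + 1)) * (2 * / dl) = e / (2 * (Hb + 1))) by (field; lra).
    assert (e / (2 * (Hb + 1)) * Hb <= e / 2).
    { apply (Rmult_le_reg_r (2 * (Hb + 1))). lra. field_simplify; nra. }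
    assert (0 <= Rabs (a - a0) * (a + a0)) by nra.
    assert (Rabs (a - a0) * (a + a0) * H q <= e / (2 * (Hb + 1)) * Hb) by (apply Rmult_le_compat; lra).
    lra. }
  lra.
Qed.

Lemma Ktrans x0 d s b : 0 < s -> 0 <= b ->
  ex_RInt (fun r => u (x0 - r) s * g (r + d) (x0 + d)) (- d) (b - d) /\
  Kb b (x0 + d) s = RInt (fun r => u (x0 - r) s * g (r + d) (x0 + d)) (- d) (b - d).
Proof.
  intros hs hb.
  set (phi := fun r => u (x0 + d - r) s * g r (x0 + d)).
  assert (hphi : ex_RInt phi (1 * (- d) + d) (1 * (b - d) + d)).
  { replace (1 * (- d) + d) with 0 by ring. replace (1 * (b - d) + d) with b by ring.
    apply exK; auto. }
  assert (ee : forall y, scal 1 (phi (1 * y + d)) = u (x0 - y) s * g (y + d) (x0 + d)).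
  { intros y. change (1 * phi (1 * y + d) = u (x0 - y) s * g (y + d) (x0 + d)).
    unfold phi. replace (x0 + d - (1 * y + d)) with (x0 - y) by ring.
    replace (1 * y + d) with (y + d) by ring. ring. }
  split.
  - apply (ex_RInt_ext (fun y => scal 1 (phi (1 * y + d)))). intros; apply ee.
    exact (ex_RInt_comp_lin (V:=R_NormedModule) phi 1 d (- d) (b - d) hphi).
  - assert (e1 : RInt (fun y => 1 * phi (1 * y + d)) (- d) (b - d) = RInt phi (1 * (- d) + d) (1 * (b - d) + d))
      by exact (RInt_comp_lin (V:=R_CompleteNormedModule) phi 1 d (- d) (b - d) hphi).
    replace (1 * (- d) + d) with 0 in e1 by ring. replace (1 * (b - d) + d) with b in e1 by ring.
    transitivity (RInt phi 0 b). reflexivity. rewrite <- e1.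
    apply RInt_ext. intros y _. exact (ee y).
Qed.

Lemma chas (f : R -> R) a b c : ex_RInt f a b -> ex_RInt f b c -> RInt f a c = RInt f a b + RInt f b c.
Proof. intros h1 h2. symmetry. exact (RInt_Chasles (V:=R_CompleteNormedModule) f a b c h1 h2). Qed.

Lemma rdiff (f1 f2 : R -> R) a b : ex_RInt f1 a b -> ex_RInt f2 a b ->
  RInt f1 a b - RInt f2 a b = RInt (fun r => f1 r - f2 r) a b.
Proof. intros h1 h2. symmetry. exact (RInt_minus (V:=R_CompleteNormedModule) f1 f2 a b h1 h2). Qed.

Lemma exdiff (f1 f2 : R -> R) a b : ex_RInt f1 a b -> ex_RInt f2 a b -> ex_RInt (fun r => f1 r - f2 r) a b.
Proof. intros h1 h2. exact (ex_RInt_minus (V:=R_NormedModule) f1 f2 a b h1 h2). Qed.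

Definition Gm := Hb / (dl * dl).

Lemma ug_bnd y r z s : 0 < s <= t -> Rabs (u y s * g r z) <= Mu * Gm.
Proof.
  intros hs. rewrite Rabs_mult. rewrite (Rabs_right (g r z)) by (apply Rle_ge, g_bnd).
  apply Rmult_le_compat. apply Rabs_pos. apply g_bnd. apply hMu; lra. apply g_bnd.
Qed.

Lemma Gm_pos : 0 <= Gm.
Proof. pose proof (g_bnd 0 0). unfold Gm. lra. Qed.

Lemma C1 b : 1 <= b -> forall x0 e, 0 < e -> exists eta, 0 < eta /\ forall x, Rabs (x - x0) < eta ->
  Rabs (ab b x - ab b x0) <= e /\ forall s, 0 < s <= t -> Rabs (Kb b x s - Kb b x0 s) <= e.
Proof.
  intros hb x0 e he.
  pose proof Mupos as hMu0. pose proof Gm_pos as hG0.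
  assert (he' : 0 < e / (2 * b * (Mu + 1))) by (apply Rdiv_lt_0_compat; [lra| ]; apply Rmult_lt_0_compat; lra).
  destruct (GU b ltac:(lra) x0 _ he') as [eta0 [heta0 [heta1 hGU]]].
  assert (he8 : 0 < e / (8 * (Mu * Gm + 1))) by (apply Rdiv_lt_0_compat; [lra| ]; nra).
  exists (Rmin eta0 (e / (8 * (Mu * Gm + 1)))). split. apply Rmin_glb_lt; lra.
  intros x hx.
  assert (hxa : Rabs (x - x0) < eta0) by (pose proof (Rmin_l eta0 (e / (8 * (Mu * Gm + 1)))); lra).
  assert (hxb : Rabs (x - x0) < e / (8 * (Mu * Gm + 1))) by (pose proof (Rmin_r eta0 (e / (8 * (Mu * Gm + 1)))); lra).
  assert (hbe : b * (e / (2 * b * (Mu + 1))) = e / (2 * (Mu + 1))) by (field; lra).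
  assert (hbe2 : e / (2 * (Mu + 1)) * (Mu + 1) = e / 2) by (field; lra).
  split.
  - unfold ab. rewrite rdiff by apply exg.
    eapply Rle_trans. apply abs_RInt_le_const. lra. apply exdiff; apply exg.
    intros r hr. assert (hh := hGU x 0 r hxa ltac:(rewrite Rabs_R0; lra) ltac:(lra)). rewrite Rplus_0_r in hh. exact hh.
    rewrite Rminus_0_r, hbe.
    assert (e / (2 * (Mu + 1)) <= e / (2 * (Mu + 1)) * (Mu + 1)).
    { pose proof (Rlt_le _ _ (Rdiv_lt_0_compat e (2 * (Mu + 1)) he ltac:(lra))). nra. }
    lra.
  - intros s hs.
    remember (x - x0) as d. replace x with (x0 + d) by lra.
    destruct (Ktrans x0 d s b ltac:(lra) ltac:(lra)) as [hex1 eK1].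
    rewrite eK1.
    set (f1 := fun r => u (x0 - r) s * g (r + d) (x0 + d)).
    set (f2 := fun r => u (x0 - r) s * g r x0).
    change (Kb b x0 s) with (RInt f2 0 b).
    assert (hex2 : ex_RInt f2 0 b) by (apply exK; lra).
    set (m1 := Rmax 0 (- d)). set (m2 := Rmin b (b - d)).
    apply Rabs_lt_between in hxa.
    assert (hm1 : 0 <= m1 /\ - d <= m1 /\ m1 <= Rabs d).
    { unfold m1. split. apply Rmax_l. split. apply Rmax_r. apply Rmax_lub. apply Rabs_pos.
      rewrite <- Rabs_Ropp. apply RRle_abs. }
    assert (hm2 : m2 <= b /\ m2 <= b - d /\ b - Rabs d <= m2).
    { unfold m2. split. apply Rmin_l. split. apply Rmin_r. apply Rmin_glb.
      pose proof (Rabs_pos d); lra. pose proof (RRle_abs d); lra. }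
    assert (hd1 : -1 < d < 1) by (rewrite Heqd; lra).
    assert (hm1' : m1 + d <= Rabs d /\ b - d - m2 <= Rabs d).
    { unfold m1, m2. destruct (Rle_or_lt 0 d).
      rewrite Rmax_left, Rmin_right by lra. rewrite Rabs_right by lra. lra.
      rewrite Rmax_right, Rmin_left by lra. rewrite Rabs_left by lra. lra. }
    assert (hm12 : m1 <= m2).
    { unfold m1, m2. destruct (Rle_or_lt 0 d).
      rewrite Rmax_left, Rmin_right by lra. lra. rewrite Rmax_right, Rmin_left by lra. lra. }
    rewrite (chas f1 (- d) m1 (b - d)) by (apply (ex_sub _ (- d) (b - d)); lra || auto).
    rewrite (chas f1 m1 m2 (b - d)) by (apply (ex_sub _ (- d) (b - d)); lra || auto).
    rewrite (chas f2 0 m1 b) by (apply (ex_sub _ 0 b); lra || auto).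
    rewrite (chas f2 m1 m2 b) by (apply (ex_sub _ 0 b); lra || auto).
    assert (b1 : Rabs (RInt f1 (- d) m1) <= Rabs d * (Mu * Gm)).
    { eapply Rle_trans. apply rint_bnd. apply (ex_sub _ (- d) (b - d)); lra || auto.
      intros; apply ug_bnd; lra. apply Rmult_le_compat_r. nra.
      rewrite (Rabs_right (m1 - - d)) by lra. lra. }
    assert (b2 : Rabs (RInt f1 m2 (b - d)) <= Rabs d * (Mu * Gm)).
    { eapply Rle_trans. apply rint_bnd. apply (ex_sub _ (- d) (b - d)); lra || auto.
      intros; apply ug_bnd; lra. apply Rmult_le_compat_r. nra.
      rewrite (Rabs_right (b - d - m2)) by lra. lra. }
    assert (b3 : Rabs (RInt f2 0 m1) <= Rabs d * (Mu * Gm)).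
    { eapply Rle_trans. apply rint_bnd. apply (ex_sub _ 0 b); lra || auto.
      intros; apply ug_bnd; lra. apply Rmult_le_compat_r. nra.
      rewrite (Rabs_right (m1 - 0)) by lra. lra. }
    assert (b4 : Rabs (RInt f2 m2 b) <= Rabs d * (Mu * Gm)).
    { eapply Rle_trans. apply rint_bnd. apply (ex_sub _ 0 b); lra || auto.
      intros; apply ug_bnd; lra. apply Rmult_le_compat_r. nra.
      rewrite (Rabs_right (b - m2)) by lra. lra. }
    assert (b5 : Rabs (RInt f1 m1 m2 - RInt f2 m1 m2) <= e / 2).
    { assert (ex1 : ex_RInt f1 m1 m2) by (apply (ex_sub _ (- d) (b - d)); lra || auto).
      assert (ex2 : ex_RInt f2 m1 m2) by (apply (ex_sub _ 0 b); lra || auto).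
      rewrite (rdiff f1 f2 m1 m2 ex1 ex2).
      eapply Rle_trans. apply abs_RInt_le_const. lra. apply exdiff; assumption.
      intros r hr. unfold f1, f2. replace (u (x0 - r) s * g (r + d) (x0 + d) - u (x0 - r) s * g r x0)
        with (u (x0 - r) s * (g (r + d) (x0 + d) - g r x0)) by ring.
      rewrite Rabs_mult. apply Rmult_le_compat. apply Rabs_pos. apply Rabs_pos.
      apply hMu; lra. apply hGU. replace (x0 + d - x0) with d by ring. apply Rabs_def1; lra.
      apply Rabs_def1; lra. lra.
      assert ((m2 - m1) * (Mu * (e / (2 * b * (Mu + 1)))) <= b * ((Mu + 1) * (e / (2 * b * (Mu + 1))))).
      { apply Rmult_le_compat; [lra | apply Rmult_le_pos; lra | lra | apply Rmult_le_compat_r; lra]. }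
      assert (b * ((Mu + 1) * (e / (2 * b * (Mu + 1)))) = e / 2) by (field; lra).
      lra. }
    assert (hd8 : Rabs d * (Mu * Gm) <= e / 8).
    { assert (Rabs d * (Mu * Gm) <= e / (8 * (Mu * Gm + 1)) * (Mu * Gm + 1)).
      { apply Rmult_le_compat; [apply Rabs_pos | apply Rmult_le_pos; lra | lra | lra]. }
      assert (hpos : 0 < Mu * Gm + 1) by (pose proof (Rmult_le_pos _ _ hMu0 hG0); lra).
      assert (e / (8 * (Mu * Gm + 1)) * (Mu * Gm + 1) = e / 8) by (field; lra). lra. }
    replace (RInt f1 (- d) m1 + (RInt f1 m1 m2 + RInt f1 m2 (b - d)) - (RInt f2 0 m1 + (RInt f2 m1 m2 + RInt f2 m2 b)))
      with (RInt f1 (- d) m1 + (RInt f1 m1 m2 - RInt f2 m1 m2) + RInt f1 m2 (b - d) - RInt f2 0 m1 - RInt f2 m2 b) by ring.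
    apply Rabs_le_between in b1. apply Rabs_le_between in b2. apply Rabs_le_between in b3.
    apply Rabs_le_between in b4. apply Rabs_le_between in b5.
    apply Rabs_le. lra.
Qed.

Lemma exp_mono a c : a <= c -> exp a <= exp c.
Proof. intros h. destruct (Rle_lt_or_eq_dec a c h). apply Rlt_le, exp_increasing; auto. subst; lra. Qed.

Lemma der_exp_mul (A : R) (v : R -> R) s dv : is_derive v s dv ->
  is_derive (fun r => exp (A * r) * v r) s (exp (A * s) * (A * v s + dv)).
Proof.
  intros hv.
  assert (h1 : is_derive (fun r => exp (A * r)) s (A * exp (A * s))).
  { auto_derive. auto. ring. }
  assert (h := is_derive_mult (K:=R_AbsRing) _ _ s _ _ h1 hv Rmult_comm).
  replace (exp (A * s) * (A * v s + dv)) with (A * exp (A * s) * v s + exp (A * s) * dv) by ring.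
  exact h.
Qed.

Lemma rc0 x A e : 0 < e -> exists d, 0 < d /\ forall s, 0 < s -> s < d -> Rabs (exp (A * s) * u x s - u x 0) < e.
Proof.
  intros he. pose proof Mupos.
  destruct (right_ed _ _ _ (hright x) (e / 2) ltac:(lra)) as [d1 [hd1 hd1']].
  set (C := Rabs A * exp (Rabs A * t) * Mu + 1).
  assert (hC : 0 < C) by (unfold C; pose proof (Rabs_pos A); pose proof (exp_pos (Rabs A * t)); pose proof (Rmult_le_pos _ _ (Rmult_le_pos _ _ (Rabs_pos A) (Rlt_le _ _ (exp_pos (Rabs A * t)))) H0); lra).
  exists (Rmin (Rmin d1 t) (e / (2 * C))). split.
  { apply Rmin_glb_lt. apply Rmin_glb_lt; lra. apply Rdiv_lt_0_compat; lra. }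
  intros s hs hsd.
  assert (s < d1) by (pose proof (Rmin_l (Rmin d1 t) (e / (2 * C))); pose proof (Rmin_l d1 t); lra).
  assert (s < t) by (pose proof (Rmin_l (Rmin d1 t) (e / (2 * C))); pose proof (Rmin_r d1 t); lra).
  assert (s < e / (2 * C)) by (pose proof (Rmin_r (Rmin d1 t) (e / (2 * C))); lra).
  specialize (hd1' s ltac:(lra) ltac:(lra)). rewrite hinit.
  replace (exp (A * s) * u x s - psi0 x) with ((exp (A * s) - 1) * u x s + (u x s - psi0 x)) by ring.
  eapply Rle_lt_trans. apply Rabs_triang. rewrite Rabs_mult.
  assert (h1 := exp_m1 (A * s)). rewrite Rabs_mult in h1. rewrite (Rabs_right s) in h1 by lra.
  assert (exp (Rabs A * s) <= exp (Rabs A * t)) by (apply exp_mono; pose proof (Rabs_pos A); nra).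
  assert (Rabs (u x s) <= Mu) by (apply hMu; lra).
  assert (Rabs (exp (A * s) - 1) * Rabs (u x s) <= s * C - s).
  { unfold C. pose proof (Rabs_pos A). pose proof (Rabs_pos (u x s)). pose proof (Rabs_pos (exp (A * s) - 1)).
    assert (Rabs (exp (A * s) - 1) <= Rabs A * s * exp (Rabs A * t)).
    { eapply Rle_trans. exact h1. apply Rmult_le_compat_l. nra. auto. }
    assert (Rabs (exp (A * s) - 1) * Rabs (u x s) <= Rabs A * s * exp (Rabs A * t) * Mu).
    { apply Rmult_le_compat; auto. }
    nra. }
  assert (s * C < e / 2).
  { apply (Rmult_lt_compat_r C) in H3; auto. replace (e / (2 * C) * C) with (e / 2) in H3 by (field; lra). lra. }
  lra.
Qed.

Lemma ode_est b x x' kap : 1 <= b -> (forall s, 0 < s <= t -> Rabs (Kb b x s - Kb b x' s) <= kap) ->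
  Rabs (exp (ab b x * t) * u x t - exp (ab b x' * t) * u x' t - (psi0 x - psi0 x')) <=
  t * (exp (Abar * t) * (Rabs (ab b x - ab b x') * t * exp (Rabs (ab b x - ab b x') * t)) * (Mu * Abar)
       + exp (Abar * t) * kap + 2 * exp (Abar * t) * (2 * Mu * M2 / b)).
Proof.
  intros hb hK.
  pose proof (ab_bnd b x hb) as hA. pose proof (ab_bnd b x' hb) as hA'.
  set (A := ab b x) in *. set (A' := ab b x') in *.
  set (E := exp (Abar * t)).
  set (gg := fun s => exp (A * s) * u x s - exp (A' * s) * u x' s).
  set (dg := fun s => exp (A * s) * (A * u x s + Derive (fun tau => u x tau) s)
                    - exp (A' * s) * (A' * u x' s + Derive (fun tau => u x' tau) s)).
  replace (exp (A * t) * u x t - exp (A' * t) * u x' t - (psi0 x - psi0 x')) with (gg t - gg 0)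
    by (unfold gg; rewrite !Rmult_0_r, exp_0, !hinit; ring).
  apply (mvt_right gg dg); auto.
  - intros s hs hst. destruct (hsol x s hs) as [I [_ hD]]. destruct (hsol x' s hs) as [I' [_ hD']].
    assert (eD : Derive (fun tau => u x tau) s = - I) by (apply is_derive_unique; exact hD).
    assert (eD' : Derive (fun tau => u x' tau) s = - I') by (apply is_derive_unique; exact hD').
    assert (h1 := der_exp_mul A (fun tau => u x tau) s _ hD).
    assert (h2 := der_exp_mul A' (fun tau => u x' tau) s _ hD').
    assert (h := is_derive_minus _ _ _ _ _ h1 h2).
    unfold dg. rewrite eD, eD'. exact h.
  - intros s hs hst.
    pose proof (decomp x s b ltac:(lra) hb) as r1. pose proof (decomp x' s b ltac:(lra) hb) as r2.
    fold A in r1. fold A' in r2.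
    set (D := Derive (fun tau => u x tau) s) in *. set (D' := Derive (fun tau => u x' tau) s) in *.
    set (K := Kb b x s) in *. set (K' := Kb b x' s) in *.
    set (eps := 2 * Mu * M2 / b) in *.
    set (e1 := exp (A * s)). set (e2 := exp (A' * s)).
    assert (he1 : 0 < e1 <= E) by (split; [apply exp_pos | apply exp_mono; nra]).
    assert (he2 : 0 < e2 <= E) by (split; [apply exp_pos | apply exp_mono; nra]).
    assert (hKb : Rabs K <= Mu * Abar).
    { pose proof (Kb_bnd b x s ltac:(lra) ltac:(lra)) as hk. fold A K in hk.
      assert (Mu * A <= Mu * Abar) by (apply Rmult_le_compat_l; [apply Mupos|lra]). lra. }
    assert (hKK : Rabs (K - K') <= kap) by (apply hK; lra).
    set (da := Rabs (A - A')).
    assert (hda : Rabs (e1 - e2) <= E * (da * t * exp (da * t))).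
    { replace (e1 - e2) with (e2 * (exp ((A - A') * s) - 1)).
      2:{ unfold e1, e2. rewrite Rmult_minus_distr_l, <- exp_plus. replace (A' * s + (A - A') * s) with (A * s) by ring. ring. }
      rewrite Rabs_mult. rewrite (Rabs_right e2) by lra.
      assert (hm := exp_m1 ((A - A') * s)). rewrite Rabs_mult, (Rabs_right s) in hm by lra. fold da in hm.
      assert (exp (da * s) <= exp (da * t)) by (apply exp_mono; unfold da; pose proof (Rabs_pos (A - A')); nra).
      assert (0 <= da) by apply Rabs_pos.
      assert (da * s * exp (da * s) <= da * t * exp (da * t)).
      { apply Rmult_le_compat; try nra. pose proof (exp_pos (da * s)); lra. }
      apply Rmult_le_compat; try lra. apply Rabs_pos. }
    unfold dg. fold e1 e2 D D'.
    replace (e1 * (A * u x s + D) - e2 * (A' * u x' s + D'))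
      with ((e1 - e2) * K + e2 * (K - K') + e1 * (D + (A * u x s - K)) - e2 * (D' + (A' * u x' s - K'))) by ring.
    set (r := D + (A * u x s - K)) in *. set (r' := D' + (A' * u x' s - K')) in *.
    assert (0 <= da * t * exp (da * t)) by (apply Rmult_le_pos; [apply Rmult_le_pos; [apply Rabs_pos|lra] | apply Rlt_le, exp_pos]).
    assert (q1 : Rabs ((e1 - e2) * K) <= E * (da * t * exp (da * t)) * (Mu * Abar)).
    { rewrite Rabs_mult. apply Rmult_le_compat; auto; apply Rabs_pos. }
    assert (q2 : Rabs (e2 * (K - K')) <= E * kap).
    { rewrite Rabs_mult, (Rabs_right e2) by lra. apply Rmult_le_compat; try lra; apply Rabs_pos. }
    assert (q3 : Rabs (e1 * r) <= E * eps).
    { rewrite Rabs_mult, (Rabs_right e1) by lra. apply Rmult_le_compat; try lra; apply Rabs_pos. }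
    assert (q4 : Rabs (e2 * r') <= E * eps).
    { rewrite Rabs_mult, (Rabs_right e2) by lra. apply Rmult_le_compat; try lra; apply Rabs_pos. }
    apply Rabs_le_between in q1. apply Rabs_le_between in q2. apply Rabs_le_between in q3. apply Rabs_le_between in q4.
    apply Rabs_le. lra.
  - intros e he.
    destruct (rc0 x A (e / 2) ltac:(lra)) as [d1 [hd1 hd1']].
    destruct (rc0 x' A' (e / 2) ltac:(lra)) as [d2 [hd2 hd2']].
    exists (Rmin d1 d2). split. apply Rmin_glb_lt; lra.
    intros s hs hsd. specialize (hd1' s hs ltac:(pose proof (Rmin_l d1 d2); lra)).
    specialize (hd2' s hs ltac:(pose proof (Rmin_r d1 d2); lra)).
    unfold gg. rewrite !Rmult_0_r, exp_0, !Rmult_1_l.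
    replace (exp (A * s) * u x s - exp (A' * s) * u x' s - (u x 0 - u x' 0))
      with ((exp (A * s) * u x s - u x 0) - (exp (A' * s) * u x' s - u x' 0)) by ring.
    apply Rabs_lt_between in hd1'. apply Rabs_lt_between in hd2'. apply Rabs_def1; lra.
Qed.

Lemma KEY x0 e : 0 < e -> exists eta, 0 < eta /\ forall x x', Rabs (x - x0) < eta -> Rabs (x' - x0) < eta ->
  Rabs (u x t - u x' t) <= e + Rabs (psi0 x - psi0 x').
Proof.
  intros he.
  pose proof Mupos as hMu0. pose proof M2pos as hM20.
  assert (hAb : 0 <= Abar) by (pose proof (ab_bnd 1 0 (Rle_refl _)); lra).
  set (E := exp (Abar * t)).
  assert (hE : 1 <= E) by (unfold E; rewrite <- exp_0; apply exp_mono; nra).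
  set (C := t * E * (6 * t * Mu * Abar + 2) + 6 * t * Mu + 1).
  assert (hC : 1 <= C).
  { unfold C. assert (0 <= t * E * (6 * t * Mu * Abar + 2)).
    { apply Rmult_le_pos. nra. assert (0 <= t * Mu * Abar) by (apply Rmult_le_pos; nra). lra. }
    assert (0 <= t * Mu) by nra. lra. }
  set (b := Rmax 1 (16 * t * E * Mu * M2 / e)).
  assert (hb1 : 1 <= b) by apply Rmax_l.
  assert (hb2 : 16 * t * E * Mu * M2 / e <= b) by apply Rmax_r.
  assert (heb : t * (2 * E * (2 * Mu * M2 / b)) <= e / 4).
  { assert (16 * t * E * Mu * M2 <= e * b).
    { apply (Rmult_le_compat_l e) in hb2; [|lra]. replace (e * (16 * t * E * Mu * M2 / e)) with (16 * t * E * Mu * M2) in hb2 by (field; lra). lra. }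
    replace (t * (2 * E * (2 * Mu * M2 / b))) with ((16 * t * E * Mu * M2) / (4 * b)) by (field; lra).
    apply (Rmult_le_reg_r (4 * b)). lra. replace (16 * t * E * Mu * M2 / (4 * b) * (4 * b)) with (16 * t * E * Mu * M2) by (field; lra).
    lra. }
  set (th := Rmin (1 / (2 * t)) (e / (2 * C))).
  assert (hth0 : 0 < th) by (apply Rmin_glb_lt; apply Rdiv_lt_0_compat; lra).
  assert (hth1 : th * t <= 1 / 2).
  { assert (hh : th <= 1 / (2 * t)) by apply Rmin_l. apply (Rmult_le_compat_r t) in hh; [|lra].
    replace (1 / (2 * t) * t) with (1 / 2) in hh by (field; lra). lra. }
  assert (hth2 : th * C <= e / 2).
  { assert (hh : th <= e / (2 * C)) by apply Rmin_r. apply (Rmult_le_compat_r C) in hh; [|lra].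
    replace (e / (2 * C) * C) with (e / 2) in hh by (field; lra). lra. }
  destruct (C1 b hb1 x0 th hth0) as [eta [heta hC1]].
  exists eta. split; auto. intros x x' hx hx'.
  destruct (hC1 x hx) as [ha1 hk1]. destruct (hC1 x' hx') as [ha2 hk2].
  pose proof (ab_bnd b x hb1) as hA. pose proof (ab_bnd b x' hb1) as hA'.
  set (A := ab b x) in *. set (A' := ab b x') in *. set (A0 := ab b x0) in *.
  assert (hda : Rabs (A - A') <= 2 * th).
  { apply Rabs_le_between in ha1. apply Rabs_le_between in ha2. apply Rabs_le. lra. }
  assert (hK : forall s, 0 < s <= t -> Rabs (Kb b x s - Kb b x' s) <= 2 * th).
  { intros s hs. specialize (hk1 s hs). specialize (hk2 s hs).
    apply Rabs_le_between in hk1. apply Rabs_le_between in hk2. apply Rabs_le. lra. }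
  pose proof (ode_est b x x' (2 * th) hb1 hK) as hode. fold A A' E in hode.
  set (da := Rabs (A - A')) in *.
  assert (hda0 : 0 <= da) by apply Rabs_pos.
  assert (hexp : exp (da * t) <= 3).
  { eapply Rle_trans. apply exp_mono. instantiate (1 := 1). nra. apply exp_le_3. }
  assert (hode2 : Rabs (exp (A * t) * u x t - exp (A' * t) * u x' t - (psi0 x - psi0 x'))
                  <= th * (t * E * (6 * t * Mu * Abar + 2)) + e / 4).
  { eapply Rle_trans. exact hode.
    assert (E * (da * t * exp (da * t)) * (Mu * Abar) <= E * (2 * th * t * 3) * (Mu * Abar)).
    { apply Rmult_le_compat_r. apply Rmult_le_pos; lra. apply Rmult_le_compat_l. lra.
      apply Rmult_le_compat; try nra. apply Rlt_le, exp_pos. }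
    assert (t * (E * (da * t * exp (da * t)) * (Mu * Abar)) <= t * (E * (2 * th * t * 3) * (Mu * Abar))) by (apply Rmult_le_compat_l; lra).
    replace (t * (E * (da * t * exp (da * t)) * (Mu * Abar) + E * (2 * th) + 2 * E * (2 * Mu * M2 / b)))
      with (t * (E * (da * t * exp (da * t)) * (Mu * Abar)) + t * (E * (2 * th)) + t * (2 * E * (2 * Mu * M2 / b))) by ring.
    replace (th * (t * E * (6 * t * Mu * Abar + 2))) with (t * (E * (2 * th * t * 3) * (Mu * Abar)) + t * (E * (2 * th))) by ring.
    lra. }
  set (p := exp (A * t) * u x t) in *. set (p' := exp (A' * t) * u x' t) in *.
  assert (eu : u x t = exp (- (A * t)) * p).
  { unfold p. rewrite <- Rmult_assoc, <- exp_plus. replace (- (A * t) + A * t) with 0 by ring. rewrite exp_0. ring. }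
  assert (eu' : exp (- (A * t)) * p' = exp ((A' - A) * t) * u x' t).
  { unfold p'. rewrite <- Rmult_assoc, <- exp_plus. replace (- (A * t) + A' * t) with ((A' - A) * t) by ring. reflexivity. }
  assert (hE1 : 0 < exp (- (A * t)) <= 1).
  { split. apply exp_pos. rewrite <- exp_0. apply exp_mono. nra. }
  replace (u x t - u x' t) with (exp (- (A * t)) * (p - p' - (psi0 x - psi0 x')) + exp (- (A * t)) * (psi0 x - psi0 x') + (exp ((A' - A) * t) - 1) * u x' t)
    by (rewrite eu, Rmult_minus_distr_r, <- eu'; ring).
  assert (h1 : Rabs (exp (- (A * t)) * (p - p' - (psi0 x - psi0 x'))) <= th * (t * E * (6 * t * Mu * Abar + 2)) + e / 4).
  { rewrite Rabs_mult, (Rabs_right (exp _)) by lra. pose proof (Rabs_pos (p - p' - (psi0 x - psi0 x'))). nra. }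
  assert (h2 : Rabs (exp (- (A * t)) * (psi0 x - psi0 x')) <= Rabs (psi0 x - psi0 x')).
  { rewrite Rabs_mult, (Rabs_right (exp _)) by lra. pose proof (Rabs_pos (psi0 x - psi0 x')). nra. }
  assert (h3 : Rabs ((exp ((A' - A) * t) - 1) * u x' t) <= th * (6 * t * Mu)).
  { rewrite Rabs_mult. pose proof (exp_m1 ((A' - A) * t)) as hm.
    rewrite Rabs_mult, (Rabs_right t) in hm by lra. rewrite (Rabs_minus_sym A' A) in hm. fold da in hm.
    assert (Rabs (u x' t) <= Mu) by (apply hMu; lra).
    assert (Rabs (exp ((A' - A) * t) - 1) <= 2 * th * t * 3).
    { eapply Rle_trans. exact hm. apply Rmult_le_compat; try nra. apply Rlt_le, exp_pos. }
    assert (Rabs (exp ((A' - A) * t) - 1) * Rabs (u x' t) <= 2 * th * t * 3 * Mu) by (apply Rmult_le_compat; try apply Rabs_pos; lra).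
    lra. }
  assert (th * (t * E * (6 * t * Mu * Abar + 2)) + th * (6 * t * Mu) <= e / 2).
  { assert (th * (t * E * (6 * t * Mu * Abar + 2)) + th * (6 * t * Mu) <= th * C) by (unfold C; nra). lra. }
  apply Rabs_le_between in h1. apply Rabs_le_between in h2. apply Rabs_le_between in h3.
  pose proof (Rabs_pos (psi0 x - psi0 x')).
  apply Rabs_le. lra.
Qed.

End Main.

Lemma final_part (psi0 : R -> R) (v : R -> R)
  (KEYv : forall x0 e, 0 < e -> exists eta, 0 < eta /\ forall x x', Rabs (x - x0) < eta -> Rabs (x' - x0) < eta ->
     Rabs (v x - v x') <= e + Rabs (psi0 x - psi0 x')) :
  (forall x0, continuous psi0 x0 -> continuous v x0) /\
  (forall x0 l, filterlim psi0 (at_left x0) (locally l) -> exists l', filterlim v (at_left x0) (locally l')) /\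
  (forall x0 l, filterlim psi0 (at_right x0) (locally l) -> exists l', filterlim v (at_right x0) (locally l')).
Proof.
  split; [|split].
  - intros x0 hc. apply cont_ed. intros e he.
    destruct (KEYv x0 (e / 2) ltac:(lra)) as [eta [heta hK]].
    destruct (proj1 (cont_ed psi0 x0) hc (e / 2) ltac:(lra)) as [d [hd hd']].
    exists (Rmin eta d). split. apply Rmin_glb_lt; lra.
    intros y hy. assert (h1 : Rabs (y - x0) < eta) by (pose proof (Rmin_l eta d); lra).
    assert (h2 : Rabs (y - x0) < d) by (pose proof (Rmin_r eta d); lra).
    specialize (hK y x0 h1 ltac:(rewrite Rminus_diag, Rabs_R0; lra)). specialize (hd' y h2). lra.
  - intros x0 l hl. apply cauchy_side. apply at_left_proper_filter.
    intros e he.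
    destruct (KEYv x0 (e / 4) ltac:(lra)) as [eta [heta hK]].
    destruct (left_ed psi0 x0 l hl (e / 4) ltac:(lra)) as [d [hd hd']].
    set (del := Rmin eta d).
    assert (hdel : 0 < del) by (apply Rmin_glb_lt; lra).
    assert (h1 : del <= eta) by apply Rmin_l. assert (h2 : del <= d) by apply Rmin_r.
    exists (v (x0 - del / 2)). unfold at_left, at_right, within, locally. exists (mkposreal del hdel). intros y hy hlt.
    assert (hy2 : Rabs (y - x0) < del) by exact hy. clear hy.
    assert (hy' : Rabs (x0 - del / 2 - x0) < eta) by (rewrite Rabs_left; lra).
    specialize (hK y (x0 - del / 2) ltac:(lra) hy').
    assert (Rabs (y - x0) = x0 - y) by (rewrite Rabs_left; lra).
    assert (ha := hd' y hlt ltac:(lra)). assert (hb := hd' (x0 - del / 2) ltac:(lra) ltac:(lra)).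
    apply Rabs_lt_between in ha. apply Rabs_lt_between in hb.
    assert (Rabs (psi0 y - psi0 (x0 - del / 2)) < e / 2) by (apply Rabs_def1; lra). lra.
  - intros x0 l hl. apply cauchy_side. apply at_right_proper_filter.
    intros e he.
    destruct (KEYv x0 (e / 4) ltac:(lra)) as [eta [heta hK]].
    destruct (right_ed psi0 x0 l hl (e / 4) ltac:(lra)) as [d [hd hd']].
    set (del := Rmin eta d).
    assert (hdel : 0 < del) by (apply Rmin_glb_lt; lra).
    assert (h1 : del <= eta) by apply Rmin_l. assert (h2 : del <= d) by apply Rmin_r.
    exists (v (x0 + del / 2)). unfold at_left, at_right, within, locally. exists (mkposreal del hdel). intros y hy hlt.
    assert (hy2 : Rabs (y - x0) < del) by exact hy. clear hy.
    assert (hy' : Rabs (x0 + del / 2 - x0) < eta) by (rewrite Rabs_right; lra).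
    specialize (hK y (x0 + del / 2) ltac:(lra) hy').
    assert (Rabs (y - x0) = y - x0) by (rewrite Rabs_right; lra).
    assert (ha := hd' y hlt ltac:(lra)). assert (hb := hd' (x0 + del / 2) ltac:(lra) ltac:(lra)).
    apply Rabs_lt_between in ha. apply Rabs_lt_between in hb.
    assert (Rabs (psi0 y - psi0 (x0 + del / 2)) < e / 2) by (apply Rabs_def1; lra). lra.
Qed.

Theorem corollary1 (H zeta psi0 : R -> R) (u : R -> R -> R) :
  smooth H ->
  bounded_fun H ->
  (forall s, H (- s) = H s /\ 0 <= H s) ->
  is_RInt_gen (fun s => s * H s) (at_point 0) (Rbar_locally p_infty) 1 ->
  (compact_support H \/ rapid_decay H) ->
  (forall x, continuous zeta x) ->
  bounded_fun zeta ->
  (exists x0, (forall x, zeta x0 <= zeta x) /\ 0 < zeta x0) ->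
  piecewise_continuous psi0 ->
  bounded_fun psi0 ->
  is_solution H zeta psi0 u ->
  forall t, 0 < t ->
    piecewise_continuous (fun x => u x t) /\
    (forall x, ~ continuous (fun y => u y t) x -> ~ continuous psi0 x).
Proof.
  intros hsm hbd hsym _ hdec hzc _ hmin hpc _ hsolv t ht.
  destruct hmin as [xm [hxm hzm]].
  destruct hbd as [Hb hHb].
  assert (hH : forall s, 0 <= H s <= Hb).
  { intros s. split. apply hsym. eapply Rle_trans. apply RRle_abs. apply hHb. }
  assert (hHb0 : 0 <= Hb) by (destruct (hH 0); lra).
  assert (hM2 : exists M2, forall s, s * s * H s <= M2).
  { destruct hdec as [[A hA] | hR].
    - exists (A * A * Hb). intros s. destruct (Rlt_or_le A (Rabs s)).
      + rewrite (hA s H0). assert (0 <= A * A) by nra. nra.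
      + apply Rabs_le_between in H0. destruct (hH s). assert (s * s <= A * A) by nra.
        assert (0 <= s * s) by nra. apply Rmult_le_compat; lra.
    - destruct (hR 0%nat 2%nat) as [M hM]. exists M. intros s. specialize (hM s).
      simpl in hM. rewrite (Rabs_right (H s)) in hM by (apply Rle_ge, hH).
      replace (s * s) with (Rabs s * (Rabs s * 1)). exact hM.
      rewrite Rmult_1_r. rewrite <- Rabs_mult. rewrite Rabs_right. ring. apply Rle_ge. nra. }
  destruct hM2 as [M2 hM2].
  assert (hHc : forall s, continuity_pt H s).
  { intros s. apply continuity_pt_filterlim. apply (@ex_derive_continuous R_AbsRing R_NormedModule).
    exact (hsm 1%nat s). }
  assert (hzc' : forall x, continuity_pt zeta x) by (intros x; apply continuity_pt_filterlim; apply hzc).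
  destruct hsolv as [hinit [hright [hstrip hsol]]].
  destruct (hstrip t) as [Mu hMu].
  pose proof (KEY H zeta psi0 u t (zeta xm) Hb M2 Mu ht hzm hxm hH hM2 hHc hzc' hMu hsol hinit hright) as hK.
  destruct (final_part psi0 (fun x => u x t) hK) as [fc [fl fr]].
  split.
  - destruct hpc as [D [hD1 hD2]]. exists D. split.
    + intros x hx. apply fc. apply hD1. exact hx.
    + intros x hx. destruct (hD2 x hx) as [[l1 hl1] [l2 hl2]]. split.
      * exact (fl x l1 hl1).
      * exact (fr x l2 hl2).
  - intros x hn hc. apply hn. apply fc. exact hc.
Qed.
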